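(* Let $\mathbb{F}$ be a finite field, $G\subseteq\mathbb{F}$, $m,k\in\mathbb{N}$, and $d,d'\in\mathbb{N}$ with $d'\ge2(|G|-1)$. Let $Q\subseteq\mathbb{F}^{m+k}$ with $|Q|<|G|^k$, and let $Z$ be uniformly random in $\mathbb{F}^{\le d,\le d'}[X_1,\dots,X_m,Y_1,\dots,Y_k]$. Then the random vectors $\big(\sum_{\vec y\in G^k}Z(\vec\alpha,\vec y)\big)_{\vec\alpha\in\mathbb{F}^m}$ and $\big(Z(\vec q)\big)_{\vec q\in Q}$ are statistically independent.
   Context: $\mathbb{F}^{\le d,\le d'}[X_1,\dots,X_m,Y_1,\dots,Y_k]$ denotes the set of $(m+k)$-variate polynomials over $\mathbb{F}$ of individual degree at most $d$ in each of $X_1,\dots,X_m$ and at most $d'$ in each of $Y_1,\dots,Y_k$. *)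

(* Defs.v *)
From HB Require Import structures.
From mathcomp Require Import all_boot all_order all_algebra.
Set Implicit Arguments. Unset Strict Implicit. Unset Printing Implicit Defensive.
Import GRing.Theory.
Local Open Scope ring_scope.

(* Exponent vectors of monomials X^e * Y^f with e_i <= d, f_j <= d'. *)
Definition expo (m k d d' : nat) : finType :=
  ({ffun 'I_m -> 'I_d.+1} * {ffun 'I_k -> 'I_d'.+1})%type.

(* F^{<=d,<=d'}[X_1..X_m,Y_1..Y_k]: a polynomial is identified with its
   (unique) coefficient vector indexed by the allowed exponent vectors. *)
Definition mpoly (F : finFieldType) (m k d d' : nat) : finType :=
  {ffun expo m k d d' -> F}.

Definition meval (F : finFieldType) (m k d d' : nat) (Z : mpoly F m k d d')
    (x : {ffun 'I_m -> F}) (y : {ffun 'I_k -> F}) : F :=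
  \sum_(e : expo m k d d')
     Z e * (\prod_(i < m) x i ^+ e.1 i) * (\prod_(j < k) y j ^+ e.2 j).

Definition cube (F : finFieldType) (k : nat) (G : {set F}) :
    {set {ffun 'I_k -> F}} :=
  [set y : {ffun 'I_k -> F} | [forall j, y j \in G]].

(* Statistical independence of random variables X, Y defined on a finite
   sample space Omega equipped with the uniform distribution:
   Pr[X = x /\ Y = y] = Pr[X = x] * Pr[Y = y] for all x, y
   (multiplied through by #|Omega|^2). *)
Definition indep_unif (Omega : finType) (T1 T2 : eqType)
    (X : Omega -> T1) (Y : Omega -> T2) : Prop :=
  forall (x : T1) (y : T2),
    (#|[set w | (X w == x) && (Y w == y)]| * #|Omega| =
     #|[set w | X w == x]| * #|[set w | Y w == y]|)%N.

(* Main.v *)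
Require Import Defs.
From HB Require Import structures.
From mathcomp Require Import all_boot all_order all_algebra.
From mathcomp Require Import ring zify.
Set Implicit Arguments. Unset Strict Implicit. Unset Printing Implicit Defensive.
Import GRing.Theory.
Local Open Scope ring_scope.

Lemma indep_add (F : finFieldType) (T : finType) (U1 U2 : finType)
  (A : {ffun T -> F} -> {ffun U1 -> F}) (B : {ffun T -> F} -> {ffun U2 -> F})
  (hA : forall u v, A (u - v) = A u - A v) (hB : forall u v, B (u - v) = B u - B v)
  (hK : forall Z, exists Z', A Z' = A Z /\ B Z' = 0) :
  indep_unif A B.
Proof.
move=> x y.
set Im := [set v | [exists w, B w == v]].
have hIm : forall v, v \in Im -> exists t, A t = 0 /\ B t = v.
  move=> v; rewrite inE => /existsP [w /eqP Bw].
  have [Z' [h1 h2]] := hK w.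
  exists (w - Z'); by rewrite hA hB h1 h2 subrr subr0.
have shift : forall (P : pred {ffun T -> F}) t, (forall w, P (w - t) = P w) ->
   #|[set w | P w && (B w == B t)]| = #|[set w | P w && (B w == 0)]|.
  move=> P t Pt; rewrite -[RHS](card_preimset _ (subIr t)); apply: eq_card => w.
  by rewrite !inE Pt hB subr_eq0.
have split : forall (P : pred {ffun T -> F}),
   #|[set w | P w]| = (\sum_(v in Im) #|[set w | P w && (B w == v)]|)%N.
  move=> P; rewrite -sum1dep_card (@partition_big _ _ _ _ _ _ _ B (fun v => v \in Im)) /=.
    by apply: eq_bigr => v _; rewrite sum1dep_card.
  by move=> w _; rewrite inE; apply/existsP; exists w.
have const : forall (P : pred {ffun T -> F}), (forall t, A t = 0 -> forall w, P (w - t) = P w) ->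
   #|[set w | P w]| = (#|Im| * #|[set w | P w && (B w == 0%R)]|)%N.
  move=> P hP; rewrite split -sum_nat_const; apply: eq_bigr => v /hIm [t [At <-]].
  by rewrite shift //; apply: hP.
case: (boolP (y \in Im)) => yIm.
  have [t [At Bt]] := hIm _ yIm.
  have e1 : #|[set w | (A w == x) && (B w == y)]| = #|[set w | (A w == x) && (B w == 0%R)]|.
    by rewrite -Bt; apply: shift => w; rewrite hA At subr0.
  have e2 : #|[set w | B w == y]| = #|[set w | B w == 0%R]|.
    by rewrite -Bt; exact: (shift (fun _ => true) t (fun w => erefl)).
  rewrite e1 e2.
  rewrite (const (fun w => A w == x)); last by move=> t' At' w; rewrite hA At' subr0.
  have -> : #|{ffun T -> F}| = #|[set w : {ffun T -> F} | true]| by rewrite cardsT.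
  rewrite (const (fun w => true)) //.
  by rewrite mulnCA mulnA.
have -> : [set w | (A w == x) && (B w == y)] = set0.
  apply/setP => w; rewrite !inE; apply/negP => /andP [_ /eqP Bw].
  by move/negP: yIm; apply; rewrite inE; apply/existsP; exists w; rewrite Bw.
have -> : [set w | B w == y] = set0.
  apply/setP => w; rewrite !inE; apply/negP => /eqP Bw.
  by move/negP: yIm; apply; rewrite inE; apply/existsP; exists w; rewrite Bw.
by rewrite cards0 !muln0.
Qed.
Definition yev (F : finFieldType) (k D : nat) (gc : {ffun {ffun 'I_k -> 'I_D.+1} -> F})
  (y : {ffun 'I_k -> F}) : F := \sum_f gc f * \prod_(j < k) y j ^+ f j.

Lemma yev_prod (F : finFieldType) (k D : nat) (u : 'I_k -> {poly F}) y :
  (forall j, size (u j) <= D.+1)%N ->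
  yev [ffun f : {ffun 'I_k -> 'I_D.+1} => \prod_j (u j)`_(f j)] y = \prod_j (u j).[y j].
Proof.
move=> hs; rewrite /yev.
rewrite (eq_bigr (fun f : {ffun 'I_k -> 'I_D.+1} => \prod_j ((u j)`_(f j) * y j ^+ f j))); last by move=> f _; rewrite ffunE big_split.
rewrite -(bigA_distr_bigA (fun j (i : 'I_D.+1) => (u j)`_i * y j ^+ i)).
by apply: eq_bigr => j _; rewrite (horner_coef_wide _ (hs j)).
Qed.

Lemma yev_sum (F : finFieldType) (k D : nat) (I : finType) (w : I -> F)
  (g : I -> {ffun {ffun 'I_k -> 'I_D.+1} -> F}) y :
  yev [ffun f => \sum_i w i * g i f] y = \sum_i w i * yev (g i) y.
Proof.
rewrite /yev.
under eq_bigr do rewrite ffunE big_distrl /=.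
rewrite exchange_big; apply: eq_bigr => i _; rewrite big_distrr; apply: eq_bigr => f _.
by rewrite /= mulrA.
Qed.

Definition lp (F : finFieldType) (G : {set F}) (a : F) : {poly F} :=
  \prod_(b in G :\ a) ('X - b%:P).
Definition lnp (F : finFieldType) (G : {set F}) (a : F) : {poly F} :=
  ((lp G a).[a])^-1 *: lp G a.

Lemma lnp_val (F : finFieldType) (G : {set F}) a t : a \in G -> t \in G ->
  (lnp G a).[t] = (t == a)%:R.
Proof.
move=> aG tG; rewrite /lnp hornerZ /lp !horner_prod.
have nz : \prod_(b in G :\ a) ('X - b%:P).[a] != 0.
  apply/prodf_neq0 => b; rewrite !inE hornerXsubC subr_eq0 => /andP [h _].
  by rewrite eq_sym.
case: eqP => [->|/eqP ta]; first by rewrite mulVf.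
rewrite [X in _ * X](bigD1 t) /=; last by rewrite !inE ta.
by rewrite hornerXsubC subrr mul0r mulr0.
Qed.

Lemma size_lnp (F : finFieldType) (G : {set F}) a : a \in G ->
  (size (lnp G a) <= #|G|)%N.
Proof.
move=> aG; apply: leq_trans (size_scale_leq _ _) _.
rewrite /lp -big_enum size_prod_XsubC -cardE (cardsD1 a G) aG.
by [].
Qed.

Lemma exists_g (F : finFieldType) (G : {set F}) (k D : nat)
  (hD : (2 * (#|G| - 1) <= D)%N)
  (S : {set {ffun 'I_k -> F}}) (hS : (#|S| < #|G| ^ k)%N) :
  exists gc : {ffun {ffun 'I_k -> 'I_D.+1} -> F},
    (forall y, y \in S -> yev gc y = 0) /\ \sum_(y in cube k G) yev gc y = 1.
Proof.
pose Gt := {x : F | x \in G}.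
pose pt (p : {ffun 'I_k -> Gt}) : {ffun 'I_k -> F} := [ffun j => val (p j)].
pose L (p : {ffun 'I_k -> Gt}) (y : {ffun 'I_k -> F}) :=
  \prod_(j < k) (lnp G (val (p j))).[y j].
have ptin : forall p, pt p \in cube k G.
  by move=> p; rewrite inE; apply/forallP => j; rewrite ffunE; exact: (valP (p j)).
have ptinj : injective pt.
  move=> p1 p2 /ffunP h; apply/ffunP => j; apply: val_inj; have := h j; by rewrite !ffunE.
have Lc : forall p y, y \in cube k G -> L p y = (y == pt p)%:R.
  move=> p y; rewrite inE => /forallP yG.
  rewrite /L (eq_bigr (fun j => (y j == val (p j))%:R)); last first.
    by move=> j _; rewrite lnp_val // ?yG //; exact: valP.
  case: (eqVneq y (pt p)) => [->|ne].
    by rewrite ?eqxx big1 // => j _; rewrite ffunE eqxx.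
  have [j hj] : exists j, y j != val (p j).
    apply/existsP; apply: contraR ne => /existsPn H; apply/eqP/ffunP => j.
    by rewrite ffunE; apply/eqP; have := H j; rewrite negbK.
  by rewrite (bigD1 j) //= (negbTE hj) mul0r.
pose Phi (c : {ffun {ffun 'I_k -> Gt} -> F}) : {ffun {s | s \in S} -> F} :=
  [ffun s => \sum_p c p * L p (val s)].
have ninj : ~~ injectiveb Phi.
  apply/injectiveP => inj; have := leq_card _ inj.
  rewrite !card_ffun !card_sig card_ord leq_exp2l ?card_finNzRing_gt1 //.
  have -> : #|[pred x | x \in G]| = #|G| by apply: eq_card.
  have -> : #|[pred x | x \in S]| = #|S| by apply: eq_card.
  by rewrite leqNgt hS.
move/injectivePn: ninj => [c1 [c2 ne eqc]].
pose c := c1 - c2.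
have Phic : forall s, s \in S -> \sum_p c p * L p s = 0.
  move=> s sS; have := congr1 (fun f : {ffun {s : {ffun 'I_k -> F} | s \in S} -> F} => f (exist _ s sS)) eqc; rewrite !ffunE /= => h.
  rewrite /c (eq_bigr (fun p => c1 p * L p s - c2 p * L p s)); last first.
    by move=> p _; rewrite !ffunE mulrBl.
  by rewrite sumrB h subrr.
have [p0 hp0] : exists p0, c p0 != 0.
  apply/existsP; apply: contraR ne => /existsPn H; rewrite -subr_eq0; apply/eqP/ffunP => p.
  by rewrite !ffunE; have := H p; rewrite negbK /c !ffunE => /eqP.
pose u (p : {ffun 'I_k -> Gt}) (j : 'I_k) : {poly F} := lnp G (val (p j)) * lnp G (val (p0 j)).
pose gc := [ffun f : {ffun 'I_k -> 'I_D.+1} => \sum_p (c p / c p0) *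
   [ffun f' : {ffun 'I_k -> 'I_D.+1} => \prod_j (u p j)`_(f' j)] f].
exists gc.
have ev : forall y, yev gc y = \sum_p c p / c p0 * (L p y * L p0 y).
  move=> y; rewrite /gc yev_sum; apply: eq_bigr => p _; rewrite yev_prod.
    by rewrite /L -big_split /=; congr (_ * _); apply: eq_bigr => j _; rewrite hornerM.
  move=> j; rewrite /u; apply: leq_trans (size_polyMleq _ _) _.
  have s1 := size_lnp (valP (p j)); have s2 := size_lnp (valP (p0 j)).
  have : (0 < #|G|)%N by apply/card_gt0P; exists (val (p j)); exact: valP.
  move: hD s1 s2; clear; rewrite -subn1; move: (size _) (size _) #|G| => a b n; lia.
split.
  move=> y yS; rewrite ev.
  transitivity ((\sum_p c p * L p y) * (L p0 y / c p0)).
    by rewrite big_distrl; apply: eq_bigr => p _ /=; ring.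
  by rewrite Phic // mul0r.
rewrite (eq_bigr (fun y => \sum_p c p / c p0 * (L p y * L p0 y))); last by move=> y _; exact: ev.
rewrite (bigD1 (pt p0)) //= [X in _ + X]big1 ?addr0; last first.
  move=> y /andP [yc ne']; apply: big1 => p _.
  by rewrite (Lc p0 y yc) (negbTE ne') mulr0 mulr0.
rewrite (bigD1 p0) //= big1 ?addr0; last first.
  move=> p ne'; rewrite (Lc p _ (ptin p0)) (inj_eq ptinj) eq_sym (negbTE ne').
  by rewrite mul0r mulr0.
by rewrite (Lc p0 _ (ptin p0)) eqxx mulr1 mulr1 mulfV.
Qed.

Lemma sum_expo (F : finFieldType) (m k d d' : nat) (g : expo m k d d' -> F) :
  \sum_(e : expo m k d d') g e = \sum_(e1 : {ffun 'I_m -> 'I_d.+1}) \sum_(f : {ffun 'I_k -> 'I_d'.+1}) g (e1, f).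
Proof. by rewrite pair_bigA; apply: eq_bigr => -[a b]. Qed.

Lemma meval_sub (F : finFieldType) (m k d d' : nat) (Z1 Z2 : {ffun expo m k d d' -> F}) x y :
  meval (Z1 - Z2 : mpoly F m k d d') x y = meval (Z1 : mpoly F m k d d') x y - meval (Z2 : mpoly F m k d d') x y.
Proof.
rewrite /meval -sumrB; apply: eq_bigr => e _; rewrite !ffunE; ring.
Qed.

Theorem corollary8p3 (F : finFieldType) (G : {set F}) (m k d d' : nat)
    (hd' : (2 * (#|G| - 1) <= d')%N)
    (Q : {set ({ffun 'I_m -> F} * {ffun 'I_k -> F})})
    (hQ : (#|Q| < #|G| ^ k)%N) :
  indep_unif
    (fun Z : mpoly F m k d d' =>
       [ffun alpha : {ffun 'I_m -> F} =>
          \sum_(y in cube k G) meval Z alpha y])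
    (fun Z : mpoly F m k d d' =>
       [ffun q : {q : ({ffun 'I_m -> F} * {ffun 'I_k -> F}) | q \in Q} =>
          meval Z (val q).1 (val q).2]).
Proof.
pose S := [set p.2 | p in Q].
have hS : (#|S| < #|G| ^ k)%N by apply: leq_ltn_trans (leq_imset_card _ _) hQ.
have [gc [g0 g1]] := exists_g hd' hS.
apply: indep_add.
- move=> u v; apply/ffunP => a; rewrite !ffunE -sumrB; apply: eq_bigr => y _.
  exact: meval_sub.
- move=> u v; apply/ffunP => q; rewrite !ffunE; exact: meval_sub.
move=> Z.
pose Xm (x : {ffun 'I_m -> F}) (e1 : {ffun 'I_m -> 'I_d.+1}) := \prod_(i < m) x i ^+ e1 i.
pose sY (f : {ffun 'I_k -> 'I_d'.+1}) := \sum_(y in cube k G) \prod_(j < k) y j ^+ f j.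
pose SZ (e1 : {ffun 'I_m -> 'I_d.+1}) := \sum_f Z (e1, f) * sY f.
pose Z' : mpoly F m k d d' := [ffun e : expo m k d d' => SZ e.1 * gc e.2].
have eZ' : forall x y, meval Z' x y = (\sum_e1 SZ e1 * Xm x e1) * yev gc y.
  move=> x y; rewrite /meval sum_expo big_distrl; apply: eq_bigr => e1 _.
  rewrite /yev big_distrr; apply: eq_bigr => f _ /=; rewrite ffunE /=; rewrite /Xm; ring.
have eZ : forall x, \sum_(y in cube k G) meval Z x y = \sum_e1 SZ e1 * Xm x e1.
  move=> x; under eq_bigr do rewrite /meval sum_expo.
  rewrite exchange_big; apply: eq_bigr => e1 _; rewrite exchange_big /SZ big_distrl.
  apply: eq_bigr => f _ /=; rewrite /sY !big_distrr /=; rewrite big_distrl; apply: eq_bigr => y _; rewrite /Xm /=; ring.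
exists Z'; split.
  apply/ffunP => a; rewrite !ffunE eZ.
  under eq_bigr do rewrite eZ'.
  by rewrite -big_distrr /= g1; apply: mulr1.
apply/ffunP => q; rewrite !ffunE eZ' g0 ?mulr0 //.
by apply/imsetP; exists (val q) => //; exact: valP.
Qed.
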